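(* Let $f\in C^1(\mathbb{R}^n,\mathbb{R}^n)$, $g\in C(\mathbb{R}\times\mathbb{R}^n\times[0,1],\mathbb{R}^n)$, and let $x_0$ be a nondegenerate $T$-periodic limit cycle of $\dot x=f(x)$, $T>0$. Let $x_\varepsilon$ ($\varepsilon\in(0,\varepsilon_0]$) be $T$-periodic solutions of $\dot x=f(x)+\varepsilon g(t,x,\varepsilon)$ with $\|x_\varepsilon(t+\Delta_\varepsilon)-x_0(t)\|\le M\varepsilon$ for all $t\in[0,T]$, $\varepsilon\in(0,\varepsilon_0]$, for some $M,\varepsilon_0>0$ and reals $\Delta_\varepsilon\to0$. Let $z$ be any eigenfunction of $\dot z=-(f'(x_0(t)))^*z$ which is not $T$-periodic, with multiplier $\rho$, and let $M^\perp_z(t)=\frac{\rho}{\rho-1}\int_{t-T}^t\langle z(s),g(s,x_0(s),0)\rangle ds$. Then for every $t\in[0,T]$: if $M^\perp_z(t)>0$ then $\cos\angle\big(z(t),x_\varepsilon(t+\Delta_\varepsilon)-x_0(t)\big)>0$ for all sufficiently small $\varepsilon>0$; and if $M^\perp_z(t)<0$ then $\cos\angle\big(z(t),x_\varepsilon(t+\Delta_\varepsilon)-x_0(t)\big)<0$ for all sufficiently small $\varepsilon>0$.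
   Context: Nondegenerate: the characteristic multiplier $+1$ of $\dot y=f'(x_0(t))y$ (eigenvalue $1$ of $Y(T)$, $Y(0)=I$) has algebraic multiplicity $1$. An eigenfunction of a linear $T$-periodic system is a nonzero solution $z$ with $z(t+T)=\rho z(t)$ for all $t$ and some $\rho\in\mathbb{R}$ (its characteristic multiplier). $\cos\angle(a,b)=\langle a,b\rangle/(\|a\|\,\|b\|)$ for $a,b\in\mathbb{R}^n$. *)

(* Defs.v *)
From HB Require Import structures.
From mathcomp Require Import all_boot all_order all_algebra.
From mathcomp Require Import all_classical all_reals all_analysis.
Set Implicit Arguments. Unset Strict Implicit. Unset Printing Implicit Defensive.
Import Order.TTheory GRing.Theory Num.Theory.
Import numFieldNormedType.Exports.
Local Open Scope classical_set_scope.
Local Open Scope ring_scope.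

Section Defs.
Variables (R : realType) (n : nat).

Definition dotv (a b : 'cV[R]_n) : R := \sum_(i < n) a i ord0 * b i ord0.

(* Euclidean norm and cos of the angle <a,b>/(|a| |b|)
   (division by 0 gives 0 in MathComp, so cos > 0 or < 0 forces a, b <> 0) *)
Definition enorm (a : 'cV[R]_n) : R := Num.sqrt (dotv a a).
Definition cosang (a b : 'cV[R]_n) : R := dotv a b / (enorm a * enorm b).

(* Jacobian matrix f'(x): entry (i,j) is the partial derivative d f_i / d x_j *)
Definition jac (f : 'cV[R]_n -> 'cV[R]_n) (x : 'cV[R]_n) : 'M[R]_n :=
  \matrix_(i, j) (derive f x (delta_mx j ord0)) i ord0.

Definition C1 (f : 'cV[R]_n -> 'cV[R]_n) : Prop :=
  (forall x, differentiable f x) /\ continuous (jac f).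

Definition solves (F : R -> 'cV[R]_n -> 'cV[R]_n) (x : R -> 'cV[R]_n) : Prop :=
  forall t, is_derive t (1 : R) x (F t (x t)).

Definition Tperiodic (T : R) (x : R -> 'cV[R]_n) : Prop := forall t, x (t + T) = x t.

Definition principal_fundamental (A : R -> 'M[R]_n) (Y : R -> 'M[R]_n) : Prop :=
  Y 0 = 1%:M /\ forall t, is_derive t (1 : R) Y (A t *m Y t).

(* x0 is a nondegenerate T-Tperiodic limit cycle of x' = f(x):
   a nonconstant T-Tperiodic solution such that the multiplier 1 of the
   variational equation y' = f'(x0 t) y has algebraic multiplicity 1 *)
Definition nondegenerate_cycle (f : 'cV[R]_n -> 'cV[R]_n) (T : R)
    (x0 : R -> 'cV[R]_n) : Prop :=
  solves (fun _ x => f x) x0 /\ Tperiodic T x0 /\ (exists t, x0 t != x0 0) /\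
  exists Y, principal_fundamental (fun t => jac f (x0 t)) Y /\
            mup 1 (char_poly (Y T)) = 1%N.

Definition adjoint_eigenfunction (f : 'cV[R]_n -> 'cV[R]_n) (T : R)
    (x0 : R -> 'cV[R]_n) (z : R -> 'cV[R]_n) (rho : R) : Prop :=
  solves (fun t y => - ((jac f (x0 t))^T *m y)) z /\
  (exists t, z t != 0) /\ (forall t, z (t + T) = rho *: z t).

Definition Mperp (g : R -> 'cV[R]_n -> R -> 'cV[R]_n) (T : R)
    (x0 z : R -> 'cV[R]_n) (rho : R) (t : R) : R :=
  rho / (rho - 1) *
  Rintegral (@lebesgue_measure R) `[t - T, t] (fun s => dotv (z s) (g s (x0 s) 0)).

End Defs.

(* Main.v *)
Require Import Defs.
From HB Require Import structures.
From mathcomp Require Import all_boot all_order all_algebra.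
From mathcomp Require Import all_classical all_reals all_analysis.
From mathcomp Require Import lra ring.
Import Order.TTheory GRing.Theory Num.Theory.
Import numFieldNormedType.Exports.
Local Open Scope classical_set_scope.
Local Open Scope ring_scope.
Set Implicit Arguments. Unset Strict Implicit. Unset Printing Implicit Defensive.

Section DotLemmas.
Variables (R : realType) (n : nat).
Implicit Types (a b c : 'cV[R]_n).

Lemma dotvDr a b c : dotv a (b + c) = dotv a b + dotv a c.
Proof. by rewrite /dotv -big_split; apply: eq_bigr => i _; rewrite mxE mulrDr. Qed.

Lemma dotvNr a b : dotv a (- b) = - dotv a b.
Proof. by rewrite /dotv -sumrN; apply: eq_bigr => i _; rewrite mxE mulrN. Qed.

Lemma dotvBr a b c : dotv a (b - c) = dotv a b - dotv a c.
Proof. by rewrite dotvDr dotvNr. Qed.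

Lemma dotvZr a b (k : R) : dotv a (k *: b) = k * dotv a b.
Proof. by rewrite /dotv mulr_sumr; apply: eq_bigr => i _; rewrite mxE mulrCA. Qed.

Lemma dotvNl a b : dotv (- a) b = - dotv a b.
Proof. by rewrite /dotv -sumrN; apply: eq_bigr => i _; rewrite mxE mulNr. Qed.

Lemma dotv0l b : dotv 0 b = 0.
Proof. by rewrite /dotv big1 // => i _; rewrite mxE mul0r. Qed.

Lemma dotv_tr (A : 'M[R]_n) a b : dotv (A^T *m a) b = dotv a (A *m b).
Proof.
rewrite /dotv.
under eq_bigr do rewrite mxE big_distrl /=.
rewrite exchange_big /=; apply: eq_bigr => k _.
rewrite mxE big_distrr /=; apply: eq_bigr => i _.
by rewrite mxE mulrCA mulrA.
Qed.

Lemma normr_entry p q (A : 'M[R]_(p, q)) i j : `|A i j| <= `|A|.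
Proof.
rewrite [leRHS]/Num.Def.normr/= mx_normrE.
by apply: le_trans (le_bigmax _ _ (i, j)).
Qed.

Lemma mxnorm_le p q (A : 'M[R]_(p, q)) (e : R) : 0 <= e ->
  (forall i j, `|A i j| <= e) -> `|A| <= e.
Proof.
move=> e0 H; rewrite [leLHS]/Num.Def.normr/= mx_normrE.
by apply: bigmax_le => // -[i j] _; exact: H.
Qed.

Lemma norm_dotv a b : `|dotv a b| <= n%:R * `|a| * `|b|.
Proof.
rewrite /dotv (le_trans (ler_norm_sum _ _ _))//.
have -> : n%:R * `|a| * `|b| = \sum_(i < n) (`|a| * `|b|).
  by rewrite sumr_const card_ord -[RHS]mulr_natl mulrA.
apply: ler_sum => i _; rewrite normrM.
by apply: ler_pM => //; exact: normr_entry.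
Qed.

Lemma dotv_gt0 a : a != 0 -> 0 < dotv a a.
Proof.
move=> a0; rewrite /dotv lt0r; apply/andP; split; last first.
  by apply: sumr_ge0 => i _; rewrite -expr2 sqr_ge0.
apply/negP => /eqP/psumr_eq0P H; apply/negP: a0; apply/negPn/eqP.
have {}H := H (fun k _ => (ltac:(by rewrite -expr2 sqr_ge0))).
apply/matrixP => i j; rewrite mxE (ord1 j).
have /eqP := H i isT.
by rewrite mulf_eq0 orbb => /eqP ->.
Qed.

End DotLemmas.

Section DeriveLemmas.
Variables (R : realType).

Lemma is_derive_entry p q (u : R -> 'M[R]_(p, q)) (s : R) (du : 'M[R]_(p, q)) (i : 'I_p) (j : 'I_q) :
  is_derive s 1 u du -> is_derive s 1 (fun s => u s i j) (du i j).
Proof.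
case=> dv dd; split; first exact: ((derivable_mxP _ _ _).1 dv i j).
by rewrite -dd (derive_mx dv) mxE.
Qed.

Lemma is_derive_dotv n (u v : R -> 'cV[R]_n) (s : R) (du dv : 'cV[R]_n) :
  is_derive s 1 u du -> is_derive s 1 v dv ->
  is_derive s 1 (fun s => dotv (u s) (v s)) (dotv du (v s) + dotv (u s) dv).
Proof.
move=> hu hv.
have H := @is_derive_sum R R R n (fun i s => u s i ord0 * v s i ord0) s 1
   (fun i => u s i ord0 *: dv i ord0 + v s i ord0 *: du i ord0)
   (fun i => is_deriveM (is_derive_entry i ord0 hu) (is_derive_entry i ord0 hv)).
rewrite fct_sumE in H.
apply: is_derive_eq H _.
rewrite /dotv -big_split /=; apply: eq_bigr => i _.
by rewrite addrC /GRing.scale /= [v s i ord0 * _]mulrC.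
Qed.

Lemma is_derive_shiftc (W : normedModType R) (u : R -> W) (s c : R) (du : W) :
  is_derive (s + c) 1 u du -> is_derive s 1 (fun s => u (s + c)) du.
Proof.
case=> dv dd.
have E : (fun h : R => h^-1 *: (((fun s => u (s + c)) \o shift s) (h *: 1) - u (s + c)))
  = (fun h => h^-1 *: ((u \o shift (s + c)) (h *: 1) - u (s + c))).
  by apply/funext => h /=; rewrite addrA.
split; first by rewrite /derivable E.
by rewrite /derive E.
Qed.

End DeriveLemmas.

Section Arith.
Variable R : realType.
Lemma ar1 (a b y d : R) : a < d / 2 -> b < d / 2 -> y <= b -> a + y < d.
Proof. lra. Qed.
Lemma ar2 (a d : R) : 0 < d -> a < d / 2 -> a < d.
Proof. lra. Qed.
Lemma ar3 (a b c : R) : a < c -> b < c -> a + b <= 2 * c.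
Proof. lra. Qed.
Lemma ar4 (e m : R) : 0 < e -> 0 <= m -> m * (2 * (e / (m * 2 + 1))) <= e.
Proof.
move=> e0 m0; have h : 0 < m * 2 + 1 by lra.
rewrite mulrA mulrA ler_pdivrMr //.
nra.
Qed.
End Arith.

Section JacLemmas.
Variables (R : realType) (n : nat).
Implicit Types (f : 'cV[R]_n -> 'cV[R]_n).

Lemma entryB p q (A B : 'M[R]_(p, q)) i j : (A - B) i j = A i j - B i j.
Proof. by rewrite !mxE. Qed.

Lemma derive_jac f (x v : 'cV[R]_n) : differentiable f x -> derive f x v = jac f x *m v.
Proof.
move=> df; rewrite deriveE //.
apply/matrixP => i k; rewrite (ord1 k) !mxE.
rewrite {1}(matrix_sum_delta v) linear_sum summxE; apply: eq_bigr => j _.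
rewrite big_ord1 linearZ !mxE deriveE //.
by rewrite mulrC.
Qed.

Lemma norm_mulmx_entry (A : 'M[R]_n) (v : 'cV[R]_n) i :
  `|(A *m v) i ord0| <= n%:R * `|A| * `|v|.
Proof.
rewrite mxE (le_trans (ler_norm_sum _ _ _))//.
have -> : n%:R * `|A| * `|v| = \sum_(j < n) (`|A| * `|v|).
  by rewrite sumr_const card_ord -[RHS]mulr_natl mulrA.
apply: ler_sum => j _; rewrite normrM.
by apply: ler_pM => //; exact: normr_entry.
Qed.

Lemma is_derive_line f (q v : 'cV[R]_n) (th : R) :
  differentiable f (q + th *: v) ->
  is_derive th 1 (fun th => f (q + th *: v)) (jac f (q + th *: v) *m v).
Proof.
move=> df.
have E : (fun h : R => h^-1 *: (((fun th => f (q + th *: v)) \o shift th) (h *: 1)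
           - f (q + th *: v)))
  = (fun h => h^-1 *: ((f \o shift (q + th *: v)) (h *: v) - f (q + th *: v))).
  apply/funext => h /=; congr (_ *: (f _ - _)).
  have -> : h%:A = h :> R by rewrite /GRing.scale /= mulr1.
  by rewrite scalerDl addrCA.
have dv : derivable f (q + th *: v) v by exact: diff_derivable.
split; first by rewrite /derivable E.
by rewrite /derive E -derive_jac.
Qed.

Lemma local_lin f : C1 f -> forall (p : 'cV[R]_n) (eta : R), 0 < eta ->
  exists2 del, 0 < del & forall q v, `|q - p| < del -> `|v| < del ->
    `|f (q + v) - f q - jac f q *m v| <= eta * `|v|.
Proof.
move=> [df cj] p eta eta0.
set c := eta / (n%:R * 2 + 1).
have c0 : 0 < c by rewrite divr_gt0 // ltr_wpDl // mulr_ge0.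
have Hn : \forall t \near p, `|jac f p - jac f t| < c.
  by move: (cj p) => /cvgrPdist_lt; apply.
have [d d0 Hd] := (nbhs_normP _ _).1 Hn.
exists (d / 2); first by rewrite divr_gt0.
move=> q v qp vd.
have nv0 : 0 <= eta * `|v| by rewrite mulr_ge0 // ltW.
apply: mxnorm_le => // i k; rewrite (ord1 k).
pose phi : R -> R := fun th : R => f (q + th *: v) i ord0.
have dphi : forall th : R, is_derive th 1 phi ((jac f (q + th *: v) *m v) i ord0).
  by move=> th; apply: is_derive_entry; apply: is_derive_line.
have [th th01 Hth] : exists2 th, th \in `]0, 1[ & phi 1 - phi 0 =
     (jac f (q + th *: v) *m v) i ord0 * (1 - 0).
  apply: (@MVT R phi (fun th => (jac f (q + th *: v) *m v) i ord0)) => //.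
  apply: derivable_within_continuous => x _.
  by case: (dphi x).
move: Hth; rewrite /phi scale1r scale0r addr0 subr0 mulr1 => Hth.
have -> : (f (q + v) - f q - jac f q *m v) i ord0 =
   f (q + v) i ord0 - f q i ord0 - (jac f q *m v) i ord0 by rewrite !entryB.
rewrite Hth.
have -> : (jac f (q + th *: v) *m v) i ord0 - (jac f q *m v) i ord0 =
   ((jac f (q + th *: v) - jac f q) *m v) i ord0 by rewrite mulmxBl entryB.
apply: le_trans (norm_mulmx_entry _ _ _) _.
have t01 : 0 <= th <= 1 by rewrite !ltW // ?(itvP th01).
have nJ : forall A : 'M[R]_n, 0 <= `|A| by move=> A; exact: normr_ge0.
have hv0 : 0 <= `|v| by exact: normr_ge0.
have Hxi : `|jac f (q + th *: v) - jac f q| <= 2 * c.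
  have h1 : `|jac f p - jac f (q + th *: v)| < c.
    apply: Hd; rewrite /ball_ /=.
    have -> : p - (q + th *: v) = (p - q) - th *: v by rewrite opprD addrA.
    apply: le_lt_trans (ler_normB _ _) _.
    rewrite normrZ distrC.
    have : `|th| * `|v| <= `|v|.
      by rewrite ger0_norm ?ler_piMl //; case/andP: t01.
    by move=> hh; apply: ar1 qp vd hh.
  have h2 : `|jac f p - jac f q| < c.
    by apply: Hd; rewrite /ball_ /= distrC; apply: ar2 qp.
  have -> : jac f (q + th *: v) - jac f q =
    (jac f p - jac f q) - (jac f p - jac f (q + th *: v)).
    by rewrite opprB [RHS]addrC addrA subrK.
  apply: le_trans (ler_normB _ _) _.
  exact: ar3 h2 h1.
have hn : 0 <= n%:R :> R by exact: ler0n.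
have : n%:R * `|jac f (q + th *: v) - jac f q| <= n%:R * (2 * c).
  exact: ler_wpM2l.
have : n%:R * (2 * c) <= eta.
  exact: ar4.
move: (nJ (jac f (q + th *: v) - jac f q)) => hj.
move=> h3 h4.
have := ler_wpM2r hv0 (le_trans h4 h3).
done.
Qed.

End JacLemmas.

Section Cont.
Variables (R : realType) (n : nat).

Lemma cont_entry p q (u : R -> 'M[R]_(p, q)) i j :
  continuous u -> continuous (fun s => u s i j).
Proof.
move=> cu s.
exact: (continuous_comp (cu s) (@coord_continuous R p q i j (u s))).
Qed.

Lemma cont_dotv (u w : R -> 'cV[R]_n) :
  continuous u -> continuous w -> continuous (fun s => dotv (u s) (w s)).
Proof.
move=> cu cw.
have -> : (fun s => dotv (u s) (w s)) =
   \sum_(i < n) (fun s => u s i ord0 * w s i ord0).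
  by rewrite fct_sumE.
elim/big_ind: _.
- by move=> s; exact: cst_continuous.
- by move=> F G cF cG s; apply: continuousD; [exact: cF|exact: cG].
- move=> i _ s; apply: (@continuousM R R^o); apply: cont_entry.
  exact: cu.
  exact: cw.
Qed.

Lemma unif_from_local (K : set R) (P : R -> R -> Prop) : compact K ->
  (forall s0, K s0 -> exists2 del, 0 < del &
     \forall s \near s0, forall d, 0 < d < del -> P d s) ->
  exists2 d, 0 < d & forall s, K s -> P d s.
Proof.
move=> /compact_near_coveringP cK loc.
have H : \forall d \near 0^'+, K `<=` P d.
  apply: (cK R (at_right 0) P) => s0 Ks0.
  have [del del0 Hs] := loc s0 Ks0.
  exists ([set s | forall d, 0 < d < del -> P d s], [set d | 0 < d < del]).
    split => //=.
    near=> d; apply/andP; split.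
      by near: d; exact: nbhs_right_gt.
    by near: d; exact: nbhs_right_lt.
  by move=> [s d] [/= Hs' Hd]; exact: Hs'.
have H2 : \forall d \near 0^'+, 0 < d /\ K `<=` P d.
  near=> d; split; first by near: d; exact: nbhs_right_gt.
  by near: d; exact: H.
have [d [d0 Hd]] := filter_ex H2.
by exists d.
Unshelve. all: by end_near. Qed.

End Cont.

Section GC.
Variables (R : realType) (n : nat).

Lemma GC (g : R -> 'cV[R]_n -> R -> 'cV[R]_n) :
  {within [set p : R * 'cV[R]_n * R | 0 <= p.2 <= 1],
     continuous (fun p : R * 'cV[R]_n * R => g p.1.1 p.1.2 p.2)} ->
  forall s0 x (eta : R), 0 < eta -> exists2 del, 0 < del &
    forall s v e, `|s - s0| < del -> `|v - x| < del -> 0 <= e < del ->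
      `|g s v e - g s0 x 0| < eta.
Proof.
move=> /subspace_continuousP cg s0 x eta eta0.
have A0 : [set p : R * 'cV[R]_n * R | 0 <= p.2 <= 1] (s0, x, 0).
  by rewrite /= lexx ler01.
have := cg _ A0.
move=> /cvgrPdist_lt /(_ eta eta0).
rewrite /within /= => /nbhs_ballP [d d0 Hd].
exists (Num.min d 1); first by rewrite lt_min d0 ltr01.
move=> s v e hs hv he.
move: hs hv he; rewrite !lt_min => /andP[hs _] /andP[hv _] /andP[e0 /andP[he he1]].
have hb : ball (s0, x, 0) d (s, v, e).
  split; first split.
  - by rewrite /= -ball_normE /ball_ /= distrC.
  - by rewrite /= -ball_normE /ball_ /= distrC.
  - by rewrite /= -ball_normE /ball_ /= sub0r normrN ger0_norm.
have := Hd _ hb; rewrite /= e0 (ltW he1) => /(_ isT).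
by rewrite distrC.
Qed.

End GC.

Section Arith2.
Variable R : realType.
Lemma ar5 (e X Y : R) : 0 < e -> 0 < X -> `|Y| <= e * (`|X| / 2) -> 0 < e * X + Y.
Proof.
move=> e0 X0 h.
have h1 : e * (`|X| / 2) = (e * X) / 2 by rewrite gtr0_norm // mulrA.
have h2 : - Y <= `|Y| by rewrite -normrN ler_norm.
have eX : 0 < e * X by rewrite mulr_gt0.
lra.
Qed.
Lemma ar6 (e X Y : R) : 0 < e -> X < 0 -> `|Y| <= e * (`|X| / 2) -> e * X + Y < 0.
Proof.
move=> e0 X0 h.
have h1 : e * (`|X| / 2) = - (e * X) / 2 by rewrite ltr0_norm // mulrA mulrN.
have h2 : Y <= `|Y| by rewrite ler_norm.
have eX : e * X < 0 by rewrite pmulr_rlt0.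
lra.
Qed.
End Arith2.

Section Misc.
Variables (R : realType) (n : nat).
Implicit Types (a b : 'cV[R]_n).

Lemma dotvZl a b (k : R) : dotv (k *: a) b = k * dotv a b.
Proof. by rewrite /dotv mulr_sumr; apply: eq_bigr => i _; rewrite mxE mulrA. Qed.

Lemma dotv0r a : dotv a 0 = 0.
Proof. by rewrite /dotv big1 // => i _; rewrite mxE mulr0. Qed.

Lemma enorm_gt0 a : a != 0 -> 0 < enorm a.
Proof. by move=> a0; rewrite /enorm sqrtr_gt0 dotv_gt0. Qed.

Lemma cosang_pos a b : 0 < dotv a b -> 0 < cosang a b.
Proof.
move=> h.
have a0 : a != 0 by apply/eqP => a0; move: h; rewrite a0 dotv0l ltxx.
have b0 : b != 0 by apply/eqP => b0; move: h; rewrite b0 dotv0r ltxx.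
by rewrite /cosang divr_gt0 // mulr_gt0 // enorm_gt0.
Qed.

Lemma cosang_neg a b : dotv a b < 0 -> cosang a b < 0.
Proof.
move=> h.
have a0 : a != 0 by apply/eqP => a0; move: h; rewrite a0 dotv0l ltxx.
have b0 : b != 0 by apply/eqP => b0; move: h; rewrite b0 dotv0r ltxx.
have p : 0 < enorm a * enorm b by rewrite mulr_gt0 // enorm_gt0.
by rewrite /cosang ltr_pdivrMr // mul0r.
Qed.

Lemma sol_cont (W : normedModType R) (x : R -> W) (F : R -> W) :
  (forall t : R, is_derive t 1 x (F t)) -> continuous x.
Proof.
move=> h t; apply: differentiable_continuous.
by apply/derivable1_diffP; case: (h t).
Qed.

Lemma bound_cont (u : R -> 'cV[R]_n) (K : set R) : continuous u -> compact K ->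
  exists2 Z, 0 < Z & forall s, K s -> `|u s| <= Z.
Proof.
move=> cu cK.
have loc : forall s0, K s0 -> exists2 del, 0 < del &
     \forall s \near s0, forall d, 0 < d < del -> `|u s| <= d^-1.
  move=> s0 _.
  have c1 : 0 < `|u s0| + 1 by rewrite ltr_pwDr // ltr01.
  exists (`|u s0| + 1)^-1; first by rewrite invr_gt0.
  have Hn : \forall s \near s0, `|u s0 - u s| < 1.
    by move: (cu s0) => /cvgrPdist_lt; apply; exact: ltr01.
  apply: filterS Hn => s hs d /andP[d0 dl].
  have h1 : `|u s| <= `|u s0| + 1.
    have -> : u s = u s0 - (u s0 - u s) by rewrite opprB addrC subrK.
    apply: le_trans (ler_normB _ _) _.
    by rewrite lerD2l ltW.
  apply: (le_trans h1).
  have := ltW dl; rewrite -[(_ + 1)^-1]mul1r ler_pdivlMr // => h.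
  by rewrite -[d^-1]mul1r ler_pdivlMr // mulrC.
have [d d0 Hd] := @unif_from_local R K (fun d s => `|u s| <= d^-1) cK loc.
by exists d^-1; rewrite ?invr_gt0.
Qed.

Lemma final_arith (rho u eps I E eta kap : R) : rho != 1 -> 0 < eps ->
  rho * u - u - eps * I = E -> `|E| <= eps * (eta * kap) ->
  `|rho / (rho - 1)| * kap * eta <= `|rho / (rho - 1) * I| / 2 ->
  (0 < rho / (rho - 1) * I -> 0 < rho * u) /\
  (rho / (rho - 1) * I < 0 -> rho * u < 0).
Proof.
move=> r1 e0 hE hb hk.
set r := rho / (rho - 1) in hk *.
have r10 : rho - 1 != 0 by rewrite subr_eq0.
have e1 : (rho - 1) * u = eps * I + E by rewrite -hE; ring.
have hu : rho * u = eps * (r * I) + r * E.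
  have -> : rho * u = r * ((rho - 1) * u) by rewrite /r mulrA divfK.
  by rewrite e1 mulrDr mulrCA.
have hrE : `|r * E| <= eps * (`|r * I| / 2).
  rewrite normrM; apply: le_trans (ler_wpM2l (normr_ge0 r) hb) _.
  have -> : `|r| * (eps * (eta * kap)) = eps * (`|r| * kap * eta) by ring.
  by apply: ler_wpM2l => //; exact: ltW.
rewrite hu; split => hX.
- exact: ar5.
- exact: ar6.
Qed.

End Misc.

Section Ar7.
Variable R : realType.
Lemma ar7 (a b r : R) : a < r / 2 -> b < r / 2 -> a + b < r.
Proof. lra. Qed.
End Ar7.

Section Unif.
Variables (R : realType) (n : nat).

Lemma near_ball (s0 r : R) : 0 < r -> \forall s \near s0, `|s0 - s| < r.
Proof. by move=> r0; apply/nbhs_normP; exists r => //= s. Qed.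

Lemma U1 (f : 'cV[R]_n -> 'cV[R]_n) (x0 : R -> 'cV[R]_n) (K : set R) :
  C1 f -> continuous x0 -> compact K -> forall eta, 0 < eta ->
  exists2 d, 0 < d & forall s, K s -> forall v, `|v| < d ->
    `|f (x0 s + v) - f (x0 s) - jac f (x0 s) *m v| <= eta * `|v|.
Proof.
move=> hf cx cK eta eta0.
apply: (@unif_from_local R K (fun d s => forall v, `|v| < d ->
    `|f (x0 s + v) - f (x0 s) - jac f (x0 s) *m v| <= eta * `|v|)) => // s0 _.
have [del del0 H] := local_lin hf (x0 s0) eta0.
exists del => //.
have Hn : \forall s \near s0, `|x0 s0 - x0 s| < del.
  by move: (cx s0) => /cvgrPdist_lt; apply.
apply: filterS Hn => s hs d /andP[d0 dl] v hv.
apply: H; first by rewrite distrC.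
exact: lt_trans hv dl.
Qed.

Lemma U2 (g : R -> 'cV[R]_n -> R -> 'cV[R]_n) (x0 : R -> 'cV[R]_n) (K : set R) :
  {within [set p : R * 'cV[R]_n * R | 0 <= p.2 <= 1],
     continuous (fun p : R * 'cV[R]_n * R => g p.1.1 p.1.2 p.2)} ->
  continuous x0 -> compact K -> forall eta, 0 < eta ->
  exists2 d, 0 < d & forall s, K s -> forall al v e, `|al| < d -> `|v| < d ->
    0 < e < d -> `|g (s + al) (x0 s + v) e - g s (x0 s) 0| <= eta.
Proof.
move=> hg cx cK eta eta0.
apply: (@unif_from_local R K (fun d s => forall al v e, `|al| < d -> `|v| < d ->
    0 < e < d -> `|g (s + al) (x0 s + v) e - g s (x0 s) 0| <= eta)) => // s0 _.
have eta2 : 0 < eta / 2 by rewrite divr_gt0.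
have [del del0 H] := GC hg s0 (x0 s0) eta2.
have del2 : 0 < del / 2 by rewrite divr_gt0.
exists (del / 2) => //.
near=> s => d /andP[d0 dl] al v e hal hv /andP[e0 ed].
have hs : `|s0 - s| < del / 2 by near: s; exact: near_ball.
have hx : `|x0 s0 - x0 s| < del / 2.
  by near: s; move: (cx s0) => /cvgrPdist_lt; apply.
have hdel : del / 2 < del by rewrite ltr_pdivrMr // ltr_pMr // ltr1n.
have hA : `|g (s + al) (x0 s + v) e - g s0 (x0 s0) 0| < eta / 2.
  apply: H.
  - have -> : s + al - s0 = (s - s0) + al by rewrite addrAC.
    apply: le_lt_trans (ler_normD _ _) _.
    by rewrite distrC; apply: ar7 hs (lt_trans hal dl).
  - have -> : x0 s + v - x0 s0 = (x0 s - x0 s0) + v by rewrite addrAC.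
    apply: le_lt_trans (ler_normD _ _) _.
    by rewrite distrC; apply: ar7 hx (lt_trans hv dl).
  - by rewrite (ltW e0) /= (lt_trans ed (lt_trans dl hdel)).
have hB : `|g s (x0 s) 0 - g s0 (x0 s0) 0| < eta / 2.
  apply: H.
  - by rewrite distrC (lt_trans hs hdel).
  - by rewrite distrC (lt_trans hx hdel).
  - by rewrite lexx /= del0.
have -> : g (s + al) (x0 s + v) e - g s (x0 s) 0 =
  (g (s + al) (x0 s + v) e - g s0 (x0 s0) 0) - (g s (x0 s) 0 - g s0 (x0 s0) 0).
  by rewrite opprB addrA subrK.
apply: le_trans (ler_normB _ _) _.
by apply: ltW; apply: ar7.
Unshelve. all: by end_near. Qed.

End Unif.

Section Ar8.
Variable R : realType.

Lemma ar8 (A m : R) : 0 <= A -> 0 <= m -> A * (m / (2 * (A + 1))) <= m / 2.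
Proof.
move=> A0 m0; have h : 0 < 2 * (A + 1) by lra.
rewrite mulrA ler_pdivrMr //.
have e : m / 2 * (2 * (A + 1)) = A * m + m.
  by rewrite mulrA divfK ?pnatr_eq0 // mulrDr mulr1 mulrC.
rewrite e; lra.
Qed.

Lemma ar8pos (A m : R) : 0 <= A -> 0 < m -> 0 < m / (2 * (A + 1)).
Proof. move=> A0 m0; rewrite divr_gt0 //; lra. Qed.

Lemma ar9 (N Zb eta M eps A B : R) : 0 < eps ->
  `|A| <= N * Zb * (eta * (M * eps)) -> `|B| <= N * Zb * eta ->
  `|A + eps * B| <= eps * (eta * (N * Zb * (M + 1))).
Proof.
move=> e0 hA hB.
apply: le_trans (ler_normD _ _) _.
rewrite normrM (gtr0_norm e0).
have : eps * `|B| <= eps * (N * Zb * eta) by rewrite ler_pM2l.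
have -> : eps * (eta * (N * Zb * (M + 1))) =
  N * Zb * (eta * (M * eps)) + eps * (N * Zb * eta) by ring.
move=> h; exact: lerD.
Qed.

Lemma ar10 (N z Z F Fb D : R) : 0 <= N -> 0 <= z -> z <= Z -> 0 <= F -> F <= Fb ->
  `|D| <= N * z * F -> `|D| <= N * Z * Fb.
Proof.
move=> N0 z0 zZ F0 FF h; apply: le_trans h _.
apply: ler_pM => //; first by rewrite mulr_ge0.
by apply: ler_pM.
Qed.

End Ar8.

Unset Implicit Arguments. Set Strict Implicit.

Theorem corollary2 (R : realType) (n : nat)
  (f : 'cV[R]_n -> 'cV[R]_n) (g : R -> 'cV[R]_n -> R -> 'cV[R]_n)
  (T : R) (x0 : R -> 'cV[R]_n)
  (xe : R -> R -> 'cV[R]_n) (Delta : R -> R) (M eps0 : R)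
  (z : R -> 'cV[R]_n) (rho : R) :
  C1 f ->
  {within [set p : R * 'cV[R]_n * R | 0 <= p.2 <= 1],
     continuous (fun p : R * 'cV[R]_n * R => g p.1.1 p.1.2 p.2)} ->
  0 < T ->
  nondegenerate_cycle f T x0 ->
  0 < M -> 0 < eps0 ->
  (forall eps, 0 < eps <= eps0 ->
     solves (fun t x => f x + eps *: g t x eps) (xe eps) /\ Tperiodic T (xe eps)) ->
  (forall eps t, 0 < eps <= eps0 -> 0 <= t <= T ->
     `| xe eps (t + Delta eps) - x0 t | <= M * eps) ->
  Delta x @[x --> 0^'+] --> 0 ->
  adjoint_eigenfunction f T x0 z rho ->
  ~ Tperiodic T z ->
  forall t, 0 <= t <= T ->
    (0 < Mperp g T x0 z rho t ->
       \forall eps \near 0^'+, 0 < cosang (z t) (xe eps (t + Delta eps) - x0 t)) /\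
    (Mperp g T x0 z rho t < 0 ->
       \forall eps \near 0^'+, cosang (z t) (xe eps (t + Delta eps) - x0 t) < 0).
Proof.
move=> hC1 hg T0 [hx0sol [hx0per _]] M0 eps00 hxe hbound hDelta
  [hzsol [_ hzper]] hznp t ht.
have rho1 : rho != 1.
  by apply/eqP => r1; apply: hznp => s; rewrite hzper r1 scale1r.
set a := t - T.
have ab : a < t by rewrite /a ltrBlDr ltrDl.
have cK : compact `[a, t] by exact: segment_compact.
have cx0 : continuous x0 := sol_cont hx0sol.
have cz : continuous z := sol_cont hzsol.
pose h0 := fun s => dotv (z s) (g s (x0 s) 0).
have cg0 : continuous (fun s => g s (x0 s) 0).
  move=> s0; apply/cvgrPdist_lt => eta eta0.
  have [del del0 H] := GC hg s0 (x0 s0) eta0.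
  near=> s; rewrite distrC; apply: H.
  - by rewrite distrC; near: s; move: (@cvg_id _ (nbhs s0)) => /cvgrPdist_lt; apply.
  - by rewrite distrC; near: s; move: (cx0 s0) => /cvgrPdist_lt; apply.
  - by rewrite lexx del0.
have ch0 : continuous h0 by exact: cont_dotv.
have hint : lebesgue_measure.-integrable `[a, t] (EFin \o h0).
  by apply: continuous_compact_integrable => //; exact: continuous_subspaceT.
have [Z Z0 hZ] := bound_cont cz cK.
set I := \int[lebesgue_measure]_(u in `[a, t]) h0 u.
have MpE : Mperp g T x0 z rho t = rho / (rho - 1) * I by [].
rewrite MpE.
set r := rho / (rho - 1).
pose kap := n%:R * Z * (M + 1) * T.
have kap0 : 0 <= kap.
  have hM1 : 0 <= M + 1 by rewrite addr_ge0 // ltW.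
  by rewrite /kap !mulr_ge0 // ltW.
suff key : r * I != 0 -> \forall eps \near 0^'+,
   (0 < r * I -> 0 < dotv (z t) (xe eps (t + Delta eps) - x0 t)) /\
   (r * I < 0 -> dotv (z t) (xe eps (t + Delta eps) - x0 t) < 0).
  split => hM.
  - have := key (lt0r_neq0 hM); apply: filterS => eps [h _].
    exact: cosang_pos (h hM).
  - have := key (ltr0_neq0 hM); apply: filterS => eps [_ h].
    exact: cosang_neg (h hM).
move=> Mp0.
pose eta := `|r * I| / (2 * (`|r| * kap + 1)).
have rk0 : 0 <= `|r| * kap by rewrite mulr_ge0.
have eta0 : 0 < eta by apply: ar8pos => //; rewrite normr_gt0.
have hk : `|r| * kap * eta <= `|r * I| / 2 by apply: ar8.
have [d1 d10 hU1] := U1 hC1 cx0 cK eta0.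
have [d2 d20 hU2] := U2 hg cx0 cK eta0.
near=> eps.
have e0 : 0 < eps by near: eps; exact: nbhs_right_gt.
have ee0 : eps <= eps0 by near: eps; exact: nbhs_right_le.
have e1 : eps < d2 by near: eps; exact: nbhs_right_lt.
have hMe1 : M * eps < d1.
  have : eps < d1 / M by near: eps; apply: nbhs_right_lt; rewrite divr_gt0.
  by rewrite ltr_pdivlMr // mulrC.
have hMe2 : M * eps < d2.
  have : eps < d2 / M by near: eps; apply: nbhs_right_lt; rewrite divr_gt0.
  by rewrite ltr_pdivlMr // mulrC.
have hD : `|Delta eps| < d2.
  have : `|0 - Delta eps| < d2.
    by near: eps; move: hDelta => /cvgrPdist_lt; apply.
  by rewrite sub0r normrN.
have hep : 0 < eps <= eps0 by rewrite e0 ee0.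
have [hxs hxp] := hxe eps hep.
case/andP: ht => ht0 htT.
pose y := fun s => xe eps (s + Delta eps).
pose d := fun s => y s - x0 s.
pose w := fun s => dotv (z s) (d s).
pose J := fun s => jac f (x0 s).
pose w' := fun s => dotv (z s) (f (y s) - f (x0 s) - J s *m d s)
   + eps * dotv (z s) (g (s + Delta eps) (y s) eps).
have dw : forall s : R, is_derive s 1 w (w' s).
  move=> s.
  have hy : is_derive s 1 y (f (y s) + eps *: g (s + Delta eps) (y s) eps).
    exact: (is_derive_shiftc (hxs (s + Delta eps))).
  have hd : is_derive s 1 d (f (y s) + eps *: g (s + Delta eps) (y s) eps - f (x0 s)).
    exact: (is_deriveB hy (hx0sol s)).
  have h := is_derive_dotv (hzsol s) hd.
  apply: (is_derive_eq h).
  rewrite /w' dotvNl dotv_tr !dotvBr !dotvDr dotvZr.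
  by rewrite /J; ring.
have hdb : forall s, a <= s <= t -> `|d s| <= M * eps.
  move=> s /andP[hs1 hs2].
  case: (lerP 0 s) => hs0.
  - apply: hbound => //; rewrite hs0 /=; exact: le_trans hs2 htT.
  - have := hbound eps (s + T) hep.
    rewrite /d /y.
    have -> : s + T + Delta eps = (s + Delta eps) + T by rewrite addrAC.
    rewrite hxp hx0per; apply.
    apply/andP; split.
    + by move: hs1; rewrite /a lerBlDr addrC => /(le_trans ht0).
    + by rewrite -lerBrDr subrr ltW.
pose H := fun x => \int[lebesgue_measure]_(u in `[a, x]) h0 u.
have dH : forall s, s \in `]a, t[ -> is_derive s 1 H (h0 s).
  move=> s; rewrite in_itv /= => /andP[hs1 hs2].
  have [dd ee] := continuous_FTC1_closed hs2 hint hs1 (ch0 s).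
  by split => //; rewrite -derive1E.
have cH : {within `[a, t], continuous H}.
  exact: parameterized_integral_continuous (ltW ab) hint.
have Ha : H a = 0 by rewrite /H set_itv1 Rintegral_set1.
have Ht : H t = I by [].
pose W := fun s => w s - eps * H s.
have [c cin hc] : exists2 c, c \in `]a, t[ & W t - W a = (w' c - eps * h0 c) * (t - a).
  apply: (@MVT R W (fun s => w' s - eps * h0 s) a t ab).
  - move=> s sin; exact: (is_deriveB (dw s) (is_deriveZ eps (dH s sin))).
  - have cw : continuous w := sol_cont dw.
    have cH' : {within `[a, t], continuous (fun s => eps * H s)}.
      move=> x; apply: continuousM; [exact: cst_continuous | exact: cH].
    exact: (within_continuousB (continuous_subspaceT cw) cH').
have ca : a <= c <= t by rewrite !ltW ?(itvP cin).
have Kc : `[a, t]%classic c by exact: (subset_itv_oo_cc cin).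
have hdc := hdb c ca.
have hF : `|f (y c) - f (x0 c) - J c *m d c| <= eta * `|d c|.
  have := hU1 c Kc (d c) (le_lt_trans hdc hMe1).
  by rewrite /d [x0 c + _]addrC subrK.
have hG : `|g (c + Delta eps) (y c) eps - g c (x0 c) 0| <= eta.
  have := hU2 c Kc (Delta eps) (d c) eps hD (le_lt_trans hdc hMe2).
  by rewrite e0 e1 /d [x0 c + _]addrC subrK; apply.
have hA : `|dotv (z c) (f (y c) - f (x0 c) - J c *m d c)|
    <= n%:R * Z * (eta * (M * eps)).
  apply: ar10 (norm_dotv _ _) => //.
  - exact: hZ.
  - exact: le_trans hF (ler_wpM2l (ltW eta0) hdc).
have hB : `|dotv (z c) (g (c + Delta eps) (y c) eps - g c (x0 c) 0)|
    <= n%:R * Z * eta.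
  by apply: ar10 (norm_dotv _ _) => //; exact: hZ.
have hW' : `|w' c - eps * h0 c| <= eps * (eta * (n%:R * Z * (M + 1))).
  have -> : w' c - eps * h0 c = dotv (z c) (f (y c) - f (x0 c) - J c *m d c)
     + eps * dotv (z c) (g (c + Delta eps) (y c) eps - g c (x0 c) 0).
    by rewrite /w' /h0 dotvBr; ring.
  exact: ar9.
have wt : w t = rho * w a.
  rewrite /w /a.
  have -> : z t = rho *: z (t - T) by rewrite -hzper subrK.
  have -> : d t = d (t - T).
    rewrite /d /y.
    have -> : t + Delta eps = (t - T + Delta eps) + T.
      by rewrite addrAC subrK.
    by rewrite hxp; congr (_ - _); rewrite -{1}(subrK T t) hx0per.
  by rewrite dotvZl.
have hE : rho * w a - w a - eps * I = W t - W a.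
  rewrite /W Ha Ht wt; ring.
have hEb : `|W t - W a| <= eps * (eta * kap).
  rewrite hc.
  have -> : t - a = T by rewrite /a opprB addrC subrK.
  rewrite normrM (gtr0_norm T0).
  apply: le_trans (ler_wpM2r (ltW T0) hW') _.
  by rewrite /kap -!mulrA.
have [p1 p2] := final_arith rho1 e0 hE hEb hk.
rewrite -/(y t) -/(d t) -/(w t) wt.
by split.
Unshelve. all: by end_near.
Qed.
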